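(* For all $m\geq 2$: $s_{1,m}(211,213)=1$, $s_{2,m}(211,213)=m+1$, and for all $n\geq 3$, \[ s_{n,m}(211,213)=2\,s_{n-1,m}(211,213)+s_{n-2,m}(211,213). \]
   Context: $[n]_m=\{1^m,\ldots,n^m\}$; a permutation of $[n]_m$ is a sequence of length $nm$ in which each element of $[n]$ appears exactly $m$ times. A sequence avoids a pattern $\pi$ if it has no subsequence order-isomorphic to $\pi$ (same relative order and same equalities among entries). $s_{n,m}(\Pi)$ is the number of permutations of $[n]_m$ avoiding all patterns in $\Pi$. *)

(* Defs.v *)
From mathcomp Require Import all_boot.
Set Implicit Arguments. Unset Strict Implicit. Unset Printing Implicit Defensive.

Definition order_iso (s p : seq nat) : bool :=
  (size s == size p) &&
  [forall i : 'I_(size s), forall j : 'I_(size s),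
     (nth 0 s i < nth 0 s j) == (nth 0 p i < nth 0 p j)].

Definition contains (s p : seq nat) : bool :=
  [exists m : (size s).-tuple bool, order_iso (mask m s) p].

Definition avoids (s p : seq nat) : bool := ~~ contains s p.

(* A permutation of the multiset [n]_m = {1^m,...,n^m}: a word of length n*m
   over the alphabet 'I_n (letter i standing for i+1) in which each letter
   occurs exactly m times. *)
Definition is_multiperm (n m : nat) (w : (n * m).-tuple 'I_n) : bool :=
  [forall i : 'I_n, count_mem i w == m].

Definition s_count (n m : nat) (Pi : seq (seq nat)) : nat :=
  #|[set w : (n * m).-tuple 'I_n |
      is_multiperm w && all (avoids (map (fun x : 'I_n => val x) w)) Pi]|.

(* Main.v *)
Require Import Defs.
From mathcomp Require Import all_boot zify.
Set Implicit Arguments. Unset Strict Implicit. Unset Printing Implicit Defensive.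

Definition R3 (a b c : nat) : bool := (b < a) && ((b == c) || (a < c)).
Definition av (s : seq nat) : Prop := forall a b c, subseq [:: a; b; c] s -> ~~ R3 a b c.

Lemma oiso3 a b c x y z : order_iso [:: a; b; c] [:: x; y; z] <->
  ((a<b)=(x<y) /\ (a<c)=(x<z) /\ (b<a)=(y<x) /\ (b<c)=(y<z) /\ (c<a)=(z<x) /\ (c<b)=(z<y)).
Proof.
rewrite /order_iso /=.
split.
- move=> /forallP H.
  have h := fun i j => eqP (forallP (H i) j).
  have := h (@Ordinal 3 0 isT) (@Ordinal 3 1 isT).
  have := h (@Ordinal 3 0 isT) (@Ordinal 3 2 isT).
  have := h (@Ordinal 3 1 isT) (@Ordinal 3 0 isT).
  have := h (@Ordinal 3 1 isT) (@Ordinal 3 2 isT).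
  have := h (@Ordinal 3 2 isT) (@Ordinal 3 0 isT).
  have := h (@Ordinal 3 2 isT) (@Ordinal 3 1 isT).
  by rewrite /= => -> -> -> -> -> ->.
- case=> h1 [h2 [h3 [h4 [h5 h6]]]].
  apply/forallP => -[[|[|[|i]]] Hi]; apply/forallP => -[[|[|[|j]]] Hj] //=;
  by rewrite ?ltnn ?h1 ?h2 ?h3 ?h4 ?h5 ?h6.
Qed.

Lemma contains3 s x y z : contains s [:: x; y; z] <->
  exists a b c, subseq [:: a; b; c] s /\ order_iso [:: a; b; c] [:: x; y; z].
Proof.
split.
- case/existsP => m Hm.
  have : size (mask m s) = 3 by move: Hm => /andP[/eqP -> _].
  case E: (mask m s) => [|a [|b [|c [|]]]] //= _.
  exists a, b, c; split; last by rewrite -E.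
  by rewrite -E mask_subseq.
- move=> [a [b [c [/subseqP [m Hm E] H]]]].
  apply/existsP.
  have Hm' : size m == size s by apply/eqP.
  exists (Tuple Hm'); by rewrite /= -E.
Qed.

Lemma avoids_av s : all (avoids s) [:: [:: 2; 1; 1]; [:: 2; 1; 3]] <-> av s.
Proof.
rewrite /= andbT /avoids; split.
- move=> /andP [H1 H2] a b c Hs; apply/negP => /andP [hba hor].
  case/orP: hor => h.
  + move/negP: H1; apply; apply/contains3; exists a, b, c; split => //.
    move/eqP: h => <-; apply/oiso3 => /=; do ! split; lia.
  + move/negP: H2; apply; apply/contains3; exists a, b, c; split => //.
    apply/oiso3 => /=; do ! split; lia.
- move=> H; apply/andP; split; apply/negP => /contains3 [a [b [c [Hs /oiso3 Hi]]]];
  move: (H a b c Hs); rewrite /R3; simpl in Hi; move: Hi => [h1 [h2 [h3 [h4 [h5 h6]]]]];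
  apply/negP; apply/negPn; apply/andP; split; try apply/orP; lia.
Qed.

Definition good n m s : Prop := size s = n*m /\ all (fun x => x < n) s /\
  (forall i, i < n -> count_mem i s = m) /\ av s.

Definition PI := [:: [:: 2; 1; 1]; [:: 2; 1; 3]].

Lemma count_val k (i : 'I_k) (w : seq 'I_k) :
  count_mem i w = count_mem (val i) (map val w).
Proof. by rewrite count_map; apply: eq_count => x; rewrite /preim /= (inj_eq val_inj). Qed.

Lemma card_link n m L : uniq L -> (forall s, s \in L <-> good n.+1 m s) ->
  s_count n.+1 m PI = size L.
Proof.
move=> UL HL; rewrite /s_count cardE.
set A := [set _ | _].
set f := fun w : (n.+1 * m).-tuple 'I_n.+1 => map (fun x : 'I_n.+1 => val x) w.
have finj : injective f.
  by move=> w1 w2 /(inj_map val_inj) E; apply: val_inj.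
rewrite -(size_map f); apply: perm_size; apply: uniq_perm.
- by rewrite (map_inj_uniq finj) enum_uniq.
- exact: UL.
move=> s; apply/idP/idP.
- case/mapP => w; rewrite mem_enum inE => /andP [Hm Ha] ->.
  apply/HL; split; first by rewrite size_map size_tuple.
  split; first by apply/allP => x /mapP [y _ ->]; apply: ltn_ord.
  split; last by apply/avoids_av.
  move=> i Hi; move/forallP: Hm => /(_ (Ordinal Hi)) /eqP.
  by rewrite count_val.
- move/HL => [Hs [Hall [Hc Hav]]].
  have Hsz : size (map (@inord n) s) == n.+1 * m by rewrite size_map Hs.
  have Hf : f (Tuple Hsz) = s.
    rewrite /f /= -map_comp -[RHS]map_id; apply/eq_in_map => x Hx /=.
    by rewrite inordK //; move/allP: Hall => /(_ x Hx).
  apply/mapP; exists (Tuple Hsz) => //.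
  rewrite mem_enum inE; apply/andP; split.
  + rewrite /is_multiperm; apply/forallP => i; rewrite count_val.
    have Hf' : map val (Tuple Hsz) = s := Hf.
    by rewrite Hf' Hc ?ltn_ord.
  + have Hf' : map (fun x : 'I_n.+1 => val x) (Tuple Hsz) = s := Hf.
    by rewrite Hf'; apply/avoids_av.
Qed.

Lemma subseq_catP (s p q : seq nat) : subseq s (p ++ q) ->
  exists s1 s2, s = s1 ++ s2 /\ subseq s1 p /\ subseq s2 q.
Proof.
case/subseqP => m Hm ->.
exists (mask (take (size p) m) p), (mask (drop (size p) m) q); split.
  by rewrite -mask_cat ?cat_take_drop // size_takel // Hm size_cat leq_addr.
by split; apply: mask_subseq.
Qed.

Lemma subseq3_cat a b c (p q : seq nat) : subseq [:: a; b; c] (p ++ q) ->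
  [\/ subseq [:: a; b; c] p, subseq [:: a; b] p /\ c \in q,
      a \in p /\ subseq [:: b; c] q | subseq [:: a; b; c] q].
Proof.
case/subseq_catP => s1 [s2 [E [H1 H2]]].
case: s1 E H1 => [|x1 [|x2 [|x3 [|x4 s1]]]] /= E H1.
- by rewrite -E in H2; apply: Or44.
- case: E => ? ?; subst; rewrite sub1seq in H1; by apply: Or43.
- case: E => ? ? ?; subst; rewrite sub1seq in H2; by apply: Or42.
- case: E => ? ? ? ?; subst; by apply: Or41.
- by case: E => _ _ _ /(congr1 size) /=; rewrite size_cat; lia.
Qed.

Lemma subseq2_cat a b (p q : seq nat) : subseq [:: a; b] (p ++ q) ->
  [\/ subseq [:: a; b] p, a \in p /\ b \in q | subseq [:: a; b] q].
Proof.
case/subseq_catP => s1 [s2 [E [H1 H2]]].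
case: s1 E H1 => [|x1 [|x2 [|x3 s1]]] /= E H1.
- by rewrite -E in H2; apply: Or33.
- case: E => ? ?; subst; rewrite sub1seq in H2; rewrite sub1seq in H1; by apply: Or32.
- case: E => ? ? ?; subst; by apply: Or31.
- by case: E => _ _ /(congr1 size) /=; rewrite size_cat; lia.
Qed.

Lemma av_sub s1 s2 : subseq s1 s2 -> av s2 -> av s1.
Proof. by move=> H A a b c Hs; apply: A; apply: subseq_trans Hs H. Qed.

Lemma av_cat p q : av p -> av q ->
  (forall a b c, subseq [:: a; b] p -> c \in q -> ~~ R3 a b c) ->
  (forall a b c, a \in p -> subseq [:: b; c] q -> ~~ R3 a b c) ->
  av (p ++ q).
Proof.
move=> Ap Aq H1 H2 a b c /subseq3_cat [] h.
- exact: Ap h.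
- case: h; exact: H1.
- case: h; exact: H2.
- exact: Aq h.
Qed.

Lemma R3_add k a b c : R3 (k + a) (k + b) (k + c) = R3 a b c.
Proof. by rewrite /R3 !ltn_add2l eqn_add2l. Qed.

Lemma av_map_add k w : av (map (addn k) w) <-> av w.
Proof.
split.
- move=> A a b c Hs; rewrite -(R3_add k); apply: A.
  by have := map_subseq (addn k) Hs.
- move=> A a b c /subseqP [m Hm E].
  rewrite -map_mask in E.
  have : size (mask m w) = 3 by rewrite -(size_map (addn k)) -E.
  case E2: (mask m w) => [|a' [|b' [|c' [|]]]] //= _.
  rewrite E2 /= in E; case: E => -> -> ->; rewrite R3_add; apply: A.
  by rewrite -E2 mask_subseq.
Qed.

Lemma av_nil : av [::].
Proof. by move=> a b c. Qed.

Lemma av_const k v : av (nseq k v).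
Proof.
move=> a b c Hs; have Hm := mem_subseq Hs.
have ha : a \in nseq k v by apply: Hm; rewrite !inE eqxx.
have hb : b \in nseq k v by apply: Hm; rewrite !inE eqxx ?orbT.
move: ha hb; rewrite !mem_nseq => /andP [_ /eqP ->] /andP [_ /eqP ->]; by rewrite /R3 ltnn.
Qed.

Lemma av_zeros p q : all (pred1 0) p -> av q -> av (p ++ q).
Proof.
move=> Hp Aq; apply: av_cat => //.
- by move/all_pred1P: Hp => ->; apply: av_const.
- move=> a b c Hs _; have ha : a \in p by apply: (mem_subseq Hs); rewrite !inE eqxx.
  by move/allP: Hp => /(_ a ha) /eqP ->; rewrite /R3 ltn0.
- by move=> a b c Ha Hs; move/allP: Hp => /(_ a Ha) /eqP ->; rewrite /R3 ltn0.
Qed.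

Lemma av_snoc q c : av q -> (forall a b, subseq [:: a; b] q -> ~~ R3 a b c) -> av (q ++ [:: c]).
Proof.
move=> Aq H; apply: av_cat => //.
- by move=> a b c0 /size_subseq.
- by move=> a b c0 Hs; rewrite inE => /eqP ->; apply: H.
- by move=> a b c' _ /size_subseq.
Qed.

Lemma subseq2_count (y : nat) (t : seq nat) : 1 < count_mem y t -> subseq [:: y; y] t.
Proof.
elim: t => //= z t IH.
case Ezy: (z == y).
- move/eqP: Ezy => ->; rewrite eqxx add1n ltnS -has_count => /hasP [x Hx /eqP E].
  by rewrite sub1seq -E.
- rewrite add0n eq_sym Ezy; exact: IH.
Qed.

Lemma subseq_mid (p : seq nat) (x : nat) (t l : seq nat) : subseq l t -> subseq (x :: l) (p ++ x :: t).
Proof.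
move=> H; rewrite -[x :: l]cat0s; apply: cat_subseq; first exact: sub0seq.
by rewrite /= eqxx.
Qed.

Lemma lead_split v (s : seq nat) : exists k r, s = nseq k v ++ r /\
  (r = [::] \/ exists x t, r = x :: t /\ x != v).
Proof.
elim: s => [|y s [k [r [E H]]]]; first by exists 0, [::]; split; [|left].
case: (eqVneq y v) => [->|ne].
- by exists k.+1, r; rewrite E.
- exists 0, (y :: s); split => //; right; by exists y, s.
Qed.

Definition goodk k n m U := size U = n*m /\ all (fun x => k <= x < k + n) U /\
  (forall i, i < n -> count_mem (k+i) U = m) /\ av U.

Lemma count_goodk k n m U : goodk k n m U ->
  forall i, count_mem i U = if (k <= i < k + n) then m else 0.
Proof.
move=> [_ [Ha [Hc _]]] i; case: ifP => [/andP [h1 h2]|h].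
- have -> : i = k + (i - k) by lia.
  apply: Hc; lia.
- apply/count_memPn/negP => Hi; move/allP: Ha => /(_ i Hi); by rewrite h.
Qed.

Lemma count_add k i (w : seq nat) : count_mem (k + i) (map (addn k) w) = count_mem i w.
Proof. rewrite count_map; apply: eq_count => x; by rewrite /preim /= eqn_add2l. Qed.

Lemma goodk_shift k n m w : goodk 0 n m w -> goodk k n m (map (addn k) w).
Proof.
move=> [Hs [Ha [Hc Hav]]]; split; first by rewrite size_map.
split.
  apply/allP => x /mapP [y Hy ->]; move/allP: Ha => /(_ y Hy) /=; lia.
split; first by move=> i Hi; rewrite count_add; apply: Hc.
exact/av_map_add.
Qed.

Lemma goodk_unshift k n m U : goodk k n m U ->
  U = map (addn k) (map (subn^~ k) U) /\ goodk 0 n m (map (subn^~ k) U).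
Proof.
move=> H; have [Hs [Ha [Hc Hav]]] := H.
have EU : U = map (addn k) (map (subn^~ k) U).
  rewrite -map_comp -[LHS]map_id; apply/eq_in_map => x Hx /=.
  move/allP: Ha => /(_ x Hx); lia.
split => //; split; first by rewrite size_map.
split.
  apply/allP => x /mapP [y Hy ->]; move/allP: Ha => /(_ y Hy) /=; lia.
split.
  by move=> i Hi; rewrite -(count_add k) -EU; apply: Hc.
by apply/(av_map_add k); rewrite -EU.
Qed.

Ltac fin := rewrite ?mul1n ?mul0n ?addn0 ?add0n; repeat (case: ifP => ?); lia.

Lemma all_nseq0 j : all (pred1 0) (nseq j 0).
Proof. by apply/all_pred1P; rewrite size_nseq. Qed.

Section Forms.
Variable m : nat.
Hypothesis m2 : 2 <= m.

Definition FA (w : seq nat) := nseq m 0 ++ map (addn 1) w.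
Definition FB (w : seq nat) := nseq m.-1 0 ++ map (addn 1) w ++ [:: 0].
Definition FC (u : seq nat) := nseq m.-1 0 ++ nseq m.-1 1 ++ map (addn 2) u ++ [:: 0; 1].

Lemma FA_good n w : goodk 0 n.+2 m w -> goodk 0 n.+3 m (FA w).
Proof.
move=> /(goodk_shift 1) H; have Hc := count_goodk H.
have [Hs [Ha _]] := H.
split; first by rewrite size_cat size_nseq Hs; nia.
split.
  apply/allP => x; rewrite mem_cat mem_nseq => /orP [/andP [_ /eqP ->]//|Hx].
  move/allP: Ha => /(_ x Hx) /=; lia.
split.
  move=> i Hi; rewrite add0n count_cat count_nseq Hc /=.
  case: i Hi => [|i] Hi /=; fin.
rewrite /FA /FB /FC; apply: av_zeros; first exact: all_nseq0.
by case: H => _ [_ [_]].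
Qed.

Lemma FB_good n w : goodk 0 n.+2 m w -> goodk 0 n.+3 m (FB w).
Proof.
move=> /(goodk_shift 1) H; have Hc := count_goodk H.
have [Hs [Ha [_ Hav]]] := H.
split; first by rewrite !size_cat size_nseq Hs /=; nia.
split.
  apply/allP => x; rewrite !mem_cat mem_nseq inE.
  case/orP => [/andP [_ /eqP ->]//|/orP [Hx|/eqP ->//]].
  move/allP: Ha => /(_ x Hx) /=; lia.
split.
  move=> i Hi; rewrite add0n !count_cat count_nseq Hc /=.
  case: i Hi => [|i] Hi /=; fin.
rewrite /FA /FB /FC; apply: av_zeros; first exact: all_nseq0.
apply: av_snoc => // a b Hsub.
have Hb : b \in map (addn 1) w by apply: (mem_subseq Hsub); rewrite !inE eqxx orbT.
move/allP: Ha => /(_ b Hb) /= hb.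
rewrite /R3; apply/negP => /andP [h1 /orP [/eqP hb0|h2]]; lia.
Qed.

Lemma FC_good n u : goodk 0 n.+1 m u -> goodk 0 n.+3 m (FC u).
Proof.
move=> /(goodk_shift 2) H; have Hc := count_goodk H.
have [Hs [Ha [_ Hav]]] := H.
split; first by rewrite !size_cat !size_nseq Hs /=; nia.
split.
  apply/allP => x; rewrite !mem_cat !mem_nseq !inE.
  case/orP => [/andP [_ /eqP ->]//|/orP [/andP [_ /eqP ->]//|/orP [Hx|/orP [/eqP ->|/eqP ->]]//]].
  move/allP: Ha => /(_ x Hx) /=; lia.
split.
  move=> i Hi; rewrite add0n !count_cat !count_nseq Hc /=.
  case: i Hi => [|[|i]] Hi /=; fin.
rewrite /FA /FB /FC; apply: av_zeros; first exact: all_nseq0.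
have HV : forall x, x \in map (addn 2) u -> 2 <= x.
  by move=> x Hx; move/allP: Ha => /(_ x Hx) /=; lia.
apply: av_cat.
- exact: av_const.
- rewrite -cat1s catA; apply: av_snoc.
  + apply: av_snoc => // a b Hsub.
    have := HV b (mem_subseq Hsub _); rewrite !inE eqxx orbT => /(_ isT) hb.
    rewrite /R3; apply/negP => /andP [h1 /orP [/eqP hb0|h2]]; lia.
  + move=> a b /subseq2_cat [Hsub|[_]|].
    * have := HV b (mem_subseq Hsub _); rewrite !inE eqxx orbT => /(_ isT) hb.
      rewrite /R3; apply/negP => /andP [h1 /orP [/eqP hb0|h2]]; lia.
    * rewrite inE => /eqP ->; rewrite /R3; apply/negP => /andP [h1 /orP [h2|h2]]; lia.
    * by move/size_subseq.
- move=> a b c Hsub _.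
  have : b \in nseq m.-1 1 by apply: (mem_subseq Hsub); rewrite !inE eqxx orbT.
  have : a \in nseq m.-1 1 by apply: (mem_subseq Hsub); rewrite !inE eqxx.
  rewrite !mem_nseq => /andP [_ /eqP ->] /andP [_ /eqP ->]; by rewrite /R3 ltnn.
- move=> a b c; rewrite mem_nseq => /andP [_ /eqP ->].
  rewrite /R3; case: (posnP b) => [->|hb]; last by rewrite ltnNge hb.
  case/subseq2_cat => [Hsub|[Hb _]|].
  + by have := HV 0 (mem_subseq Hsub _); rewrite !inE eqxx => /(_ isT).
  + by have := HV 0 Hb.
  + rewrite /=; by case: (c =P 1) => [->|].
Qed.

End Forms.

Lemma sub3_cat (a b c : nat) X Y : a \in X -> subseq [:: b; c] Y -> subseq [:: a; b; c] (X ++ Y).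
Proof. by move=> Ha Hb; apply: (@cat_subseq _ [:: a] [:: b; c]) => //; rewrite sub1seq. Qed.

Lemma sub2_cat (b c : nat) X Y : b \in X -> c \in Y -> subseq [:: b; c] (X ++ Y).
Proof. by move=> Ha Hb; apply: (@cat_subseq _ [:: b] [:: c]); rewrite sub1seq. Qed.

Lemma sub_suf (l Z Y : seq nat) : subseq l Y -> subseq l (Z ++ Y).
Proof. by move=> H; apply: subseq_trans H (suffix_subseq _ _). Qed.

Lemma av_bad s a b c : av s -> subseq [:: a; b; c] s -> R3 a b c -> False.
Proof. by move=> A H R; move: (A a b c H); rewrite R. Qed.

Lemma count_nseq_mem (i j v : nat) : count_mem i (nseq j v) = (v == i) * j.
Proof. by rewrite count_nseq. Qed.

Section Decomp.
Variable m : nat.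
Hypothesis m2 : 2 <= m.

Lemma zero_step n s : goodk 0 n.+2 m s ->
  (exists r, s = nseq m 0 ++ r /\ 0 \notin r) \/
  (exists x P S, s = nseq m.-1 0 ++ x :: P ++ 0 :: S /\ x != 0 /\ 0 \notin P /\ 0 \notin S).
Proof.
move=> H; have Hc := count_goodk H; have [Hs [Ha [_ Hav]]] := H.
have [k [r [E Hr]]] := lead_split 0 s.
case: Hr => [Er|[x [t [Er Hx]]]].
  have := Hc 1; rewrite E Er cats0 count_nseq_mem /=; lia.
subst r.
have H0 := Hc 0; rewrite E count_cat count_nseq_mem /= (negbTE Hx) add0n mul1n in H0.
have Ht : count_mem 0 t <= 1.
  rewrite leqNgt; apply/negP => /subseq2_count H2.
  apply: (av_bad Hav (a := x) (b := 0) (c := 0)).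
    by rewrite E; apply: sub_suf; rewrite /= eqxx.
  by rewrite /R3 eqxx lt0n Hx.
case: (posnP (count_mem 0 t)) => Ht0.
- left; exists (x :: t); split; first by rewrite E -H0 Ht0 addn0.
  by rewrite inE negb_or eq_sym Hx; apply/count_memPn.
- right.
  have Hin : 0 \in t by rewrite -has_pred1 has_count.
  move: H0 Ht Ht0 E; case/splitPr: Hin => P S; rewrite !count_cat /=.
  set cP := count_mem 0 P; set cS := count_mem 0 S => H0 Ht Ht0 E.
  exists x, P, S; split; first by rewrite E; have -> : k = m.-1 by lia.
  split => //; split; apply/count_memPn; rewrite -/cP -/cS; lia.
Qed.


Lemma block_good N n k p U q s : goodk 0 N m s -> s = p ++ U ++ q -> k + n <= N ->
  (forall x, x \in U -> k <= x < k + n) ->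
  (forall x, x \in p -> ~~ (k <= x < k + n)) ->
  (forall x, x \in q -> ~~ (k <= x < k + n)) ->
  size U = n * m -> goodk k n m U.
Proof.
move=> H E hN HU Hp Hq HsU; have Hc := count_goodk H; have [Hs [Ha [_ Hav]]] := H.
split => //; split; first by apply/allP.
split.
  move=> i Hi; have := Hc (k + i); rewrite E !count_cat.
  have -> : count_mem (k + i) p = 0.
    apply/count_memPn/negP => /Hp; rewrite leq_addr /=; lia.
  have -> : count_mem (k + i) q = 0.
    apply/count_memPn/negP => /Hq; rewrite leq_addr /=; lia.
  rewrite addn0 add0n => ->; case: ifP => //; lia.
apply: av_sub Hav; rewrite E; apply: sub_suf; exact: prefix_subseq.
Qed.

Lemma decomp3 n s : goodk 0 n.+3 m s ->
  (exists w, goodk 0 n.+2 m w /\ s = FA m w) \/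
  (exists w, goodk 0 n.+2 m w /\ s = FB m w) \/
  (exists u, goodk 0 n.+1 m u /\ s = FC m u).
Proof.
move=> H; have Hc := count_goodk H; have [Hs [Ha [_ Hav]]] := H.
have Hlt : forall x, x \in s -> x < n.+3 by move=> x /(allP Ha).
case: (zero_step (n := n.+1) H) => [[r [E Hr]] | [x [P [S [E [Hx [HP HS]]]]]]].
- left.
  have G : goodk 1 n.+2 m r.
    apply: (block_good (N := n.+3) (p := nseq m 0) (q := [::]) H).
    + by rewrite cats0.
    + by [].
    + move=> x Hx; have := Hlt x; rewrite E mem_cat Hx orbT => /(_ isT).
      have : x != 0 by apply/negP => /eqP x0; move: Hr; rewrite -x0 Hx.
      lia.
    + by move=> x; rewrite mem_nseq => /andP [_ /eqP ->].
    + by [].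
    + move: Hs; rewrite E size_cat size_nseq; nia.
  have [EU Gw] := goodk_unshift G.
  by exists (map (subn^~ 1) r); split => //; rewrite E /FA -EU.
case: S E HS => [|y S'] E HS.
- right; left.
  have G : goodk 1 n.+2 m (x :: P).
    apply: (block_good (N := n.+3) (p := nseq m.-1 0) (q := [:: 0]) H).
    + by rewrite E.
    + by [].
    + move=> z Hz; have := Hlt z; rewrite E mem_cat -cat_cons mem_cat Hz orbT => /(_ isT).
      have : z != 0 by apply/negP => /eqP z0; move: Hz; rewrite z0 inE eq_sym (negbTE Hx) (negbTE HP).
      lia.
    + by move=> z; rewrite mem_nseq => /andP [_ /eqP ->].
    + by move=> z; rewrite inE => /eqP ->.
    + move: Hs; rewrite E size_cat -cat_cons size_cat size_nseq /=; nia.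
  have [EU Gw] := goodk_unshift G.
  by exists (map (subn^~ 1) (x :: P)); split => //; rewrite E /FB -EU.
right; right.
set W := x :: P; set T := y :: S'.
have E' : s = nseq m.-1 0 ++ W ++ 0 :: T by [].
have HW : 0 \notin W by rewrite inE negb_or eq_sym Hx.
have HT : 0 \notin T by [].
have Ha' : forall a, a \in W -> a != 0 by move=> a Hin; apply/negP => /eqP a0; move: HW; rewrite -a0 Hin.
have stepa : forall a c, a \in W -> c \in T -> c <= a.
  move=> a c Hin Hc'; rewrite leqNgt; apply/negP => hac.
  apply: (av_bad Hav (a := a) (b := 0) (c := c)).
    rewrite E'; apply: sub_suf; apply: sub3_cat => //; apply: (@cat_subseq _ [:: 0] [:: c] [:: 0] T) => //; by rewrite sub1seq.
  by rewrite /R3 hac orbT andbT lt0n Ha'.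
have stepb : forall c, c \in T -> c = 1.
  move=> c Hc'.
  have c0 : c != 0 by apply/negP => /eqP c0; move: HT; rewrite -c0 Hc'.
  case: (ltngtP c 1) => // [c1|c1]; first by rewrite ltnS leqn0 (negbTE c0) in c1.
  have h1W : count_mem 1 W = 0.
    apply/count_memPn/negP => /stepa /(_ Hc'); lia.
  have := Hc 1; rewrite E' !count_cat count_nseq_mem h1W /= => hT.
  have : 1 < count_mem 1 T by rewrite /T /=; lia.
  move/subseq2_count => H11.
  apply: False_ind; apply: (av_bad Hav (a := x) (b := 1) (c := 1)).
    rewrite E'; apply: sub_suf; apply: sub3_cat; first exact: mem_head.
    exact: subseq_trans H11 (subseq_cons _ _).
  have := stepa x c (mem_head _ _) Hc'; rewrite /R3 eqxx /=; lia.
have y1 : y = 1 by apply: stepb; exact: mem_head.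
have two : 2 \in W.
  have : 2 \in s by rewrite -has_pred1 has_count Hc /=; lia.
  rewrite E' !mem_cat mem_nseq andbF /= inE /=.
  case/orP => // /stepb //.
have S'0 : S' = [::].
  case ES: S' => [//|z S''].
  have z1 : z = 1 by apply: stepb; rewrite /T ES !inE eqxx orbT.
  apply: False_ind; apply: (av_bad Hav (a := 2) (b := 1) (c := 1)); last by [].
  rewrite E'; apply: sub_suf; apply: sub3_cat => //.
  by rewrite /T ES y1 z1 /= sub0seq.
subst S' y.
have h1W : count_mem 1 W = m.-1.
  have := Hc 1; rewrite E' !count_cat count_nseq_mem /=; lia.
have [j [r' [EW Hr']]] := lead_split 1 W.
case: Hr' => [Er|[y0 [t' [Er Hy0]]]].
  by move: two; rewrite EW Er cats0 mem_nseq andbF.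
subst r'.
have y00 : y0 != 0 by apply: Ha'; rewrite EW mem_cat mem_head orbT.
have hj : count_mem 1 W = j + count_mem 1 t'.
  by rewrite EW count_cat count_nseq_mem /= (negbTE Hy0) mul1n.
have ht0 : count_mem 1 t' = 0.
  apply/count_memPn/negP => Hin.
  apply: (av_bad Hav (a := y0) (b := 1) (c := 1)).
    have E3 : s = (nseq m.-1 0 ++ nseq j 1) ++ y0 :: (t' ++ [:: 0; 1]) by rewrite E' EW -!catA.
    rewrite E3; apply: sub_suf; rewrite /= eqxx; apply: sub2_cat => //.
  by rewrite /R3 eqxx /= ltn_neqAle eq_sym Hy0 lt0n y00.
have jm : j = m.-1 by move: h1W; rewrite hj ht0 addn0.
set U := y0 :: t'.
have E4 : s = (nseq m.-1 0 ++ nseq m.-1 1) ++ U ++ [:: 0; 1] by rewrite E' EW jm -!catA.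
have G : goodk 2 n.+1 m U.
  apply: (block_good (N := n.+3) H E4) => //.
  - move=> z Hz; have := Hlt z; rewrite E4 !mem_cat Hz orbT => /(_ isT).
    have : z != 0 by apply: Ha'; rewrite EW mem_cat Hz orbT.
    have : z != 1.
      move: Hz; rewrite inE => /orP [/eqP -> //|Hz]; apply/negP => /eqP z1.
      by move/count_memPn: ht0; rewrite -z1 Hz.
    lia.
  - by move=> z; rewrite mem_cat !mem_nseq => /orP [] /andP [_ /eqP ->].
  - by move=> z; rewrite !inE => /orP [] /eqP ->.
  - move: Hs; rewrite E4 !size_cat !size_nseq /=; nia.
have [EU Gu] := goodk_unshift G.
by exists (map (subn^~ 2) U); split => //; rewrite E4 /FC -EU -catA.
Qed.

End Decomp.

Lemma catL_inj (p X Y : seq nat) : p ++ X = p ++ Y -> X = Y.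
Proof. by elim: p => //= a p IH [] /IH. Qed.

Section Lists.
Variable m : nat.
Hypothesis m2 : 2 <= m.

Lemma nseq_split (X : seq nat) : nseq m 0 ++ X = nseq m.-1 0 ++ 0 :: X.
Proof. by case: m m2 => // m' _ /=; elim: m' => //= k ->. Qed.

Definition E2 k := nseq m.-1 0 ++ nseq k 1 ++ 0 :: nseq (m - k) 1.

Lemma E2_good k : k <= m -> goodk 0 2 m (E2 k).
Proof.
move=> hk; split.
  rewrite /E2 !size_cat /= !size_nseq; lia.
split.
  apply/allP => x; rewrite /E2 !mem_cat !inE !mem_nseq.
  by case/orP => [/andP [_ /eqP ->]|/orP [/andP [_ /eqP ->]|/orP [/eqP ->|/andP [_ /eqP ->]]]].
split.
  move=> i Hi; rewrite /E2 !count_cat /= !count_nseq_mem.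
  case: i Hi => [|[|i]] Hi //=; lia.
rewrite /E2; apply: av_zeros; first exact: all_nseq0.
apply: av_cat.
- exact: av_const.
- rewrite -cat1s; apply: av_zeros => //; exact: av_const.
- move=> a b c Hsub _.
  have : b \in nseq k 1 by apply: (mem_subseq Hsub); rewrite !inE eqxx orbT.
  have : a \in nseq k 1 by apply: (mem_subseq Hsub); rewrite !inE eqxx.
  rewrite !mem_nseq => /andP [_ /eqP ->] /andP [_ /eqP ->]; by rewrite /R3 ltnn.
- move=> a b c; rewrite mem_nseq => /andP [_ /eqP ->].
  rewrite [subseq _ _]/=; case: ifP => [/eqP ->|_] Hsub.
  + move: Hsub; rewrite sub1seq mem_nseq => /andP [_ /eqP ->]; by [].
  + have : b \in nseq (m - k) 1 by apply: (mem_subseq Hsub); rewrite !inE eqxx.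
    rewrite mem_nseq => /andP [_ /eqP ->]; by rewrite /R3 ltnn.
Qed.

Lemma all1 (X : seq nat) : (forall x, x \in X -> x = 1) -> X = nseq (size X) 1.
Proof. move=> H; apply/all_pred1P/allP => x /H ->; by []. Qed.

Lemma E2_decomp s : goodk 0 2 m s -> exists k, k <= m /\ s = E2 k.
Proof.
move=> H; have [Hs [Ha [_ Hav]]] := H.
have Hlt : forall x, x \in s -> x < 2 by move=> x /(allP Ha).
case: (zero_step m2 (n := 0) H) => [[r [E Hr]] | [x [P [S [E [Hx [HP HS]]]]]]].
- exists 0; split => //.
  have Er : r = nseq (size r) 1.
    apply: all1 => x Hx; have := Hlt x; rewrite E mem_cat Hx orbT => /(_ isT).
    have : x != 0 by apply/negP => /eqP x0; move: Hr; rewrite -x0 Hx.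
    lia.
  have Hsr : size r = m by move: Hs; rewrite E size_cat size_nseq; lia.
  by rewrite E /E2 nseq_split Er Hsr subn0.
- have H1 : forall z, z \in x :: P ++ S -> z = 1.
    move=> z Hz; have := Hlt z.
    rewrite E mem_cat; move: Hz; rewrite inE mem_cat => /orP [/eqP ->|/orP [Hz|Hz]].
    + rewrite inE eqxx orbT => /(_ isT); move: Hx; lia.
    + rewrite inE mem_cat Hz orbT orbT => /(_ isT).
      have : z != 0 by apply/negP => /eqP z0; move: HP; rewrite -z0 Hz.
      lia.
    + rewrite inE mem_cat inE Hz !orbT => /(_ isT).
      have : z != 0 by apply/negP => /eqP z0; move: HS; rewrite -z0 Hz.
      lia.
  have x1 : x = 1 by apply: H1; exact: mem_head.
  have EP : P = nseq (size P) 1 by apply: all1 => z Hz; apply: H1; rewrite inE mem_cat Hz orbT.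
  have ES : S = nseq (size S) 1 by apply: all1 => z Hz; apply: H1; rewrite inE mem_cat Hz !orbT.
  have Hsz : size S = m - (size P).+1.
    move: Hs; rewrite E size_cat /= size_cat /= size_nseq; lia.
  exists (size P).+1; split; first by move: Hs; rewrite E size_cat /= size_cat /= size_nseq; lia.
  by rewrite E /E2 -Hsz -ES x1 /= -EP.
Qed.

Definition L2 := [seq E2 k | k <- iota 0 m.+1].

Lemma E2_find k : find (pred1 0) (drop m.-1 (E2 k)) = k.
Proof.
rewrite /E2 drop_size_cat ?size_nseq // find_cat size_nseq.
have -> : has (pred1 0) (nseq k 1) = false.
  by apply/negbTE/hasPn => x; rewrite mem_nseq => /andP [_ /eqP ->].
by rewrite /= addn0.
Qed.

Lemma L2_spec : uniq L2 /\ forall s, s \in L2 <-> goodk 0 2 m s.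
Proof.
split.
  rewrite map_inj_uniq ?iota_uniq // => k1 k2 E.
  by rewrite -(E2_find k1) E E2_find.
move=> s; split.
- case/mapP => k; rewrite mem_iota add0n ltnS => /andP [_ hk] ->; exact: E2_good.
- move/E2_decomp => [k [hk ->]]; apply/mapP; exists k => //.
  by rewrite mem_iota add0n ltnS hk.
Qed.

Fixpoint Lf n : seq (seq nat) :=
  match n with
  | 0 => [:: [::]]
  | 1 => [:: nseq m 0]
  | 2 => L2
  | S ((S ((S k) as n1)) as n2) => map (FA m) (Lf n2) ++ map (FB m) (Lf n2) ++ map (FC m) (Lf n1)
  end.

Lemma L1_spec : forall s, s \in [:: nseq m 0] <-> goodk 0 1 m s.
Proof.
move=> s; rewrite inE; split.
- move/eqP => ->; split; first by rewrite size_nseq mul1n.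
  split; first by apply/allP => x; rewrite mem_nseq => /andP [_ /eqP ->].
  split; last exact: av_const.
  by case=> // _; rewrite count_nseq_mem /= mul1n.
- move=> [Hs [Ha _]]; apply/eqP.
  have -> : s = nseq (size s) 0.
    apply/all_pred1P/allP => x /(allP Ha) /=; lia.
  by rewrite Hs mul1n.
Qed.

Lemma catR_inj (X Y Z : seq nat) : X ++ Z = Y ++ Z -> X = Y.
Proof.
move/(congr1 rev); rewrite !rev_cat => /catL_inj /(congr1 rev); by rewrite !revK.
Qed.

Lemma FA_inj : injective (FA m).
Proof. by move=> w1 w2 /catL_inj /(inj_map (@addnI 1)). Qed.

Lemma FB_inj : injective (FB m).
Proof. by move=> w1 w2 /catL_inj /catR_inj /(inj_map (@addnI 1)). Qed.

Lemma FC_inj : injective (FC m).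
Proof. by move=> w1 w2 /catL_inj /catL_inj /catR_inj /(inj_map (@addnI 2)). Qed.

Lemma nthA w : nth 0 (FA m w) m.-1 = 0.
Proof. rewrite /FA nth_cat size_nseq ifT ?nth_nseq ?ifT //; lia. Qed.

Lemma nthB w : w != [::] -> nth 0 (FB m w) m.-1 != 0.
Proof. by case: w => // a w _; rewrite /FB nth_cat size_nseq ltnn subnn. Qed.

Lemma nthC u : nth 0 (FC m u) m.-1 = 1.
Proof.
rewrite /FC nth_cat size_nseq ltnn subnn nth_cat size_nseq ifT ?nth_nseq ?ifT //; lia.
Qed.

Lemma lastB w : last 0 (FB m w) = 0.
Proof. by rewrite /FB !last_cat. Qed.

Lemma lastC u : last 0 (FC m u) = 1.
Proof. by rewrite /FC !last_cat. Qed.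

Definition spec n := uniq (Lf n) /\ forall s, s \in Lf n <-> goodk 0 n m s.

Lemma Lf_step n : spec n.+1 -> spec n.+2 -> spec n.+3.
Proof.
move=> [U1 H1] [U2 H2].
have ne : forall w, w \in Lf n.+2 -> w != [::].
  move=> w /H2 [Hs _]; apply/negP => /eqP E; move: Hs; rewrite E /=; nia.
split.
- rewrite /= !cat_uniq !map_inj_uniq //; try exact: FA_inj; try exact: FB_inj; try exact: FC_inj.
  rewrite U1 U2 /= andbT; apply/andP; split.
  + apply/hasPn => x; rewrite mem_cat => /orP [] /mapP [w Hw ->];
    apply/mapP => -[w' _ /(congr1 (fun s => nth 0 s m.-1))].
    * by rewrite nthA => E; move: (nthB (ne w Hw)); rewrite E.
    * by rewrite nthA nthC.
  + apply/hasPn => x /mapP [w Hw ->]; apply/mapP => -[w' _ /(congr1 (last 0))].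
    by rewrite lastB lastC.
- move=> s; rewrite /= !mem_cat; split.
  + case/orP => [/mapP [w /H2 Hw ->]|/orP [/mapP [w /H2 Hw ->]|/mapP [w /H1 Hw ->]]].
    * exact: FA_good.
    * exact: FB_good.
    * exact: FC_good.
  + case/(decomp3 m2) => [[w [Hw ->]]|[[w [Hw ->]]|[w [Hw ->]]]].
    * by rewrite map_f //; apply/H2.
    * by rewrite map_f ?orbT //; apply/H2.
    * by rewrite map_f ?orbT //; apply/H1.
Qed.

Lemma Lf_spec n : spec n.+1 /\ spec n.+2.
Proof.
elim: n => [|n [h1 h2]].
- split.
  + split; first by [].
    exact: L1_spec.
  + exact: L2_spec.
- by split => //; apply: Lf_step.
Qed.

End Lists.

Lemma gg n m s : good n m s <-> goodk 0 n m s.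
Proof. by []. Qed.

Lemma count_spec m n : 2 <= m -> spec m n.+1 -> s_count n.+1 m PI = size (Lf m n.+1).
Proof.
move=> m2 [U H]; apply: card_link => // s; rewrite gg; exact: H.
Qed.

Theorem theorem5 :
  forall m : nat, 2 <= m ->
    s_count 1 m [:: [:: 2; 1; 1]; [:: 2; 1; 3]] = 1 /\
    s_count 2 m [:: [:: 2; 1; 1]; [:: 2; 1; 3]] = m + 1 /\
    (forall n : nat, 3 <= n ->
       s_count n m [:: [:: 2; 1; 1]; [:: 2; 1; 3]] =
         2 * s_count n.-1 m [:: [:: 2; 1; 1]; [:: 2; 1; 3]]
         + s_count n.-2 m [:: [:: 2; 1; 1]; [:: 2; 1; 3]]).
Proof.
move=> m m2.
have S1 := Lf_spec m2 0.
split; first by rewrite (count_spec m2 S1.1).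
split; first by rewrite (count_spec m2 S1.2) /= /L2 size_map size_iota addn1.
case=> [|[|[|n]]] // _.
have [Sa Sb] := Lf_spec m2 n.
have Sc := Lf_step m2 Sa Sb.
rewrite /= (count_spec m2 Sc) (count_spec m2 Sb) (count_spec m2 Sa).
by rewrite /= !size_cat !size_map; lia.
Qed.
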